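(* Consider the setting described in the context and suppose the stepsizes satisfy conditions (A), (B) and (C). Let $u^\star=(x^\star,y^\star)$ satisfy $0\in F(x^\star)+A^Ty^\star$ and $0\in G(y^\star)-Ax^\star$. Then there is a constant $C_U>0$ such that the PDHG iterates satisfy $\|u_k-u^\star\|_{H_k}^2\le C_U$ for all $k$.
   Context: Let $A\in\mathbb{R}^{M\times N}$, let $f$ and $g$ be convex functions on $\mathbb{R}^N$ and $\mathbb{R}^M$, and let $X\subset\mathbb{R}^N$, $Y\subset\mathbb{R}^M$ be convex sets; consider the saddle-point problem $\min_{x\in X}\max_{y\in Y} f(x)+y^TAx-g(y)$. Let $\chi_C$ denote the characteristic function of a set $C$ ($0$ on $C$, $+\infty$ off $C$), and let $F=\partial(f+\chi_X)$, $G=\partial(g+\chi_Y)$. It is assumed that the problem is feasible (such $u^\star$ exists) and that the minimizations below have solutions. The PDHG method with stepsizes $\tau_k,\sigma_k>0$ starts from $x_0,y_0$ and iterates $x_{k+1}=\arg\min_{x\in X} f(x)+\frac{1}{2\tau_k}\|x-(x_k-\tau_kA^Ty_k)\|^2$, $y_{k+1}=\arg\min_{y\in Y} g(y)+\frac{1}{2\sigma_k}\|y-(y_k+\sigma_kA(2x_{k+1}-x_k))\|^2$. Write $u_k=(x_k,y_k)$, $M_k=\begin{pmatrix}\tau_k^{-1}I & -A^T\\ -A & \sigma_k^{-1}I\end{pmatrix}$, $H_k=\begin{pmatrix}\tau_k^{-1}I & 0\\ 0 & \sigma_k^{-1}I\end{pmatrix}$, and for a symmetric (possibly indefinite) matrix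 $M$, $\|u\|_M^2:=u^TMu$. Let $\phi_k=\max\{(\tau_k-\tau_{k+1})/\tau_k,\ (\sigma_k-\sigma_{k+1})/\sigma_k,\ 0\}$. Conditions: (A) the sequences $\{\tau_k\}$ and $\{\sigma_k\}$ are bounded; (B) $\sum_{k\ge0}\phi_k<C_\phi<\infty$ for some constant $C_\phi$; (C) either (C1) there is a constant $L$ with $\tau_k\sigma_k<L<\rho(A^TA)^{-1}$ for all $k>0$ ($\rho$ = spectral radius), or (C2) either $X$ or $Y$ is bounded and there is $c\in(0,1)$ with $\|u_{k+1}-u_k\|_{M_k}^2\ge c\|u_{k+1}-u_k\|_{H_k}^2$ for all $k>0$. *)

(* Defs.v *)
From mathcomp Require Import all_boot all_order all_algebra.
From mathcomp Require Import classical_sets reals.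
Set Implicit Arguments. Unset Strict Implicit. Unset Printing Implicit Defensive.
Import Order.TTheory GRing.Theory Num.Theory.
Local Open Scope ring_scope.
Local Open Scope classical_set_scope.

Section Defs.
Variable R : realType.

Definition sqnorm n (v : 'cV[R]_n) : R := (v^T *m v) 0 0.

Definition qnorm2 n (Q : 'M[R]_n) (u : 'cV[R]_n) : R := (u^T *m Q *m u) 0 0.

Definition convex_fun n (f : 'cV[R]_n -> R) : Prop :=
  forall x y (t : R), 0 <= t <= 1 ->
    f (t *: x + (1 - t) *: y) <= t * f x + (1 - t) * f y.

Definition convex_set n (X : set 'cV[R]_n) : Prop :=
  forall x y (t : R), X x -> X y -> 0 <= t <= 1 -> X (t *: x + (1 - t) *: y).

Definition bounded_set n (X : set 'cV[R]_n) : Prop :=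
  exists r : R, forall x, X x -> sqnorm x <= r.

(* p \in \partial (f + \chi_X)(x): x in X and the subgradient inequality on X
   (outside X, f + \chi_X = +oo, so only z in X matter, and the subdifferential
   at points outside X is empty). *)
Definition subdiff_ind n (f : 'cV[R]_n -> R) (X : set 'cV[R]_n)
  (x p : 'cV[R]_n) : Prop :=
  X x /\ forall z, X z -> f x + (p^T *m (z - x)) 0 0 <= f z.

Definition is_argmin n (h : 'cV[R]_n -> R) (X : set 'cV[R]_n) (x : 'cV[R]_n) : Prop :=
  X x /\ forall z, X z -> h x <= h z.

(* spectral radius of a symmetric real matrix (all its eigenvalues are real) *)
Definition spec_radius n (B : 'M[R]_n) : R :=
  sup [set `|a| | a in [set a : R | eigenvalue B a]].

(* u = (x, y) is stacked as col_mx x y : 'cV_(N + M) *)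
Definition Mmat N M (A : 'M[R]_(M, N)) (tau sigma : R) : 'M[R]_(N + M) :=
  block_mx (tau^-1)%:M (- A^T) (- A) (sigma^-1)%:M.

Definition Hmat N M (tau sigma : R) : 'M[R]_(N + M) :=
  block_mx (tau^-1)%:M 0 0 (sigma^-1)%:M.

Definition phi (tau sigma : nat -> R) (k : nat) : R :=
  Num.max (Num.max ((tau k - tau k.+1) / tau k) ((sigma k - sigma k.+1) / sigma k)) 0.

Definition pdhg_iterates N M (A : 'M[R]_(M, N)) (f : 'cV[R]_N -> R) (g : 'cV[R]_M -> R)
  (X : set 'cV[R]_N) (Y : set 'cV[R]_M) (tau sigma : nat -> R)
  (x : nat -> 'cV[R]_N) (y : nat -> 'cV[R]_M) : Prop :=
  forall k,
    is_argmin (fun z => f z + (2 * tau k)^-1 * sqnorm (z - (x k - tau k *: (A^T *m y k)))) X (x k.+1)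
 /\ is_argmin (fun w => g w + (2 * sigma k)^-1 *
                  sqnorm (w - (y k + sigma k *: (A *m (2%:R *: x k.+1 - x k))))) Y (y k.+1).

End Defs.

(* Main.v *)
Require Import Defs.
From mathcomp Require Import all_boot all_order all_algebra.
From mathcomp Require Import classical_sets reals.
From mathcomp Require Import ring lra.
Import Order.TTheory GRing.Theory Num.Theory.
Local Open Scope ring_scope.
Local Open Scope classical_set_scope.
Set Implicit Arguments. Unset Strict Implicit. Unset Printing Implicit Defensive.

Definition ip (R : realType) n (u v : 'cV[R]_n) : R := (u^T *m v) 0 0.

Lemma ipE (R : realType) n (u v : 'cV[R]_n) : ip u v = \sum_i u i 0 * v i 0.
Proof. by rewrite /ip !mxE; apply: eq_bigr => i _; rewrite mxE. Qed.

Lemma ipC (R : realType) n (u v : 'cV[R]_n) : ip u v = ip v u.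
Proof. by rewrite !ipE; apply: eq_bigr => i _; rewrite mulrC. Qed.

Lemma ipDl (R : realType) n (u v w : 'cV[R]_n) : ip (u + v) w = ip u w + ip v w.
Proof. by rewrite !ipE -big_split; apply: eq_bigr => i _; rewrite mxE mulrDl. Qed.

Lemma ipNl (R : realType) n (u w : 'cV[R]_n) : ip (- u) w = - ip u w.
Proof. by rewrite !ipE -sumrN; apply: eq_bigr => i _; rewrite mxE mulNr. Qed.

Lemma ipZl (R : realType) n a (u w : 'cV[R]_n) : ip (a *: u) w = a * ip u w.
Proof. by rewrite !ipE mulr_sumr; apply: eq_bigr => i _; rewrite mxE mulrA. Qed.

Lemma ipBl (R : realType) n (u v w : 'cV[R]_n) : ip (u - v) w = ip u w - ip v w.
Proof. by rewrite ipDl ipNl. Qed.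

Lemma ipDr (R : realType) n (u v w : 'cV[R]_n) : ip w (u + v) = ip w u + ip w v.
Proof. by rewrite ipC ipDl ![ip _ w]ipC. Qed.
Lemma ipNr (R : realType) n (u w : 'cV[R]_n) : ip w (- u) = - ip w u.
Proof. by rewrite ipC ipNl ipC. Qed.
Lemma ipBr (R : realType) n (u v w : 'cV[R]_n) : ip w (u - v) = ip w u - ip w v.
Proof. by rewrite ipDr ipNr. Qed.
Lemma ipZr (R : realType) n a (u w : 'cV[R]_n) : ip w (a *: u) = a * ip w u.
Proof. by rewrite ipC ipZl ipC. Qed.

Lemma ip_ge0 (R : realType) n (u : 'cV[R]_n) : 0 <= ip u u.
Proof. by rewrite ipE; apply: sumr_ge0 => i _; rewrite -expr2 sqr_ge0. Qed.

Lemma ip_mx (R : realType) m n (A : 'M[R]_(m, n)) u v :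
  ip (A *m u) v = ip u (A^T *m v).
Proof. by rewrite /ip trmx_mul mulmxA. Qed.

Lemma ip_eq0 (R : realType) n (u : 'cV[R]_n) : ip u u = 0 -> u = 0.
Proof.
rewrite ipE => /eqP; rewrite psumr_eq0; last by move=> i _; rewrite -expr2 sqr_ge0.
move=> /allP H; apply/matrixP => i j; rewrite (ord1 j) mxE.
by have := H i (mem_index_enum _); rewrite -expr2 sqrf_eq0 => /eqP.
Qed.

Lemma e00D (R : realType) (A B : 'M[R]_1) : (A + B) 0 0 = A 0 0 + B 0 0.
Proof. by rewrite mxE. Qed.
Lemma e00N (R : realType) (A : 'M[R]_1) : (- A) 0 0 = - A 0 0.
Proof. by rewrite mxE. Qed.
Lemma e00Z (R : realType) a (A : 'M[R]_1) : (a *: A) 0 0 = a * A 0 0.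
Proof. by rewrite mxE. Qed.

Lemma qH (R : realType) N M (t s : R) (a : 'cV[R]_N) (b : 'cV[R]_M) :
  qnorm2 (Hmat N M t s) (col_mx a b) = t^-1 * ip a a + s^-1 * ip b b.
Proof.
rewrite /qnorm2 /Hmat tr_col_mx mul_row_block mul_row_col !mul_mx_scalar !mulmx0.
rewrite !add0r !addr0 -!scalemxAl mxE.
by rewrite [X in X + _]mxE [X in _ + X]mxE.
Qed.

Lemma qM (R : realType) N M (A : 'M[R]_(M, N)) (t s : R) (a : 'cV[R]_N) (b : 'cV[R]_M) :
  qnorm2 (Mmat A t s) (col_mx a b) =
    t^-1 * ip a a + s^-1 * ip b b - 2 * ip (A *m a) b.
Proof.
rewrite /qnorm2 /Mmat tr_col_mx mul_row_block mul_row_col !mul_mx_scalar.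
rewrite !mulmxDl -!scalemxAl !mulmxN !mulNmx.
rewrite !e00D !e00N !e00Z.
have -> : (b^T *m A *m a) 0 0 = ip (A *m a) b by rewrite ipC /ip mulmxA.
have -> : (a^T *m A^T *m b) 0 0 = ip (A *m a) b by rewrite ip_mx /ip mulmxA.
rewrite /ip. lra.
Qed.

Lemma small_lemma (R : realType) (a b : R) : 0 <= b ->
  (forall s, 0 < s -> s <= 1 -> 0 <= a + s * b) -> 0 <= a.
Proof.
move=> b0 H; rewrite leNgt; apply/negP => a0.
set d := - a + 2 * b + 1.
have d0 : 0 < d by rewrite /d; lra.
set s := - a / d.
have sd : s * d = - a by rewrite /s divfK // gt_eqF.
have s0 : 0 < s by rewrite /s divr_gt0 // oppr_gt0.
have s1 : s <= 1 by rewrite /s ler_pdivrMr // mul1r /d; lra.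
have h1 := H s s0 s1.
have h2 : d * (a + s * b) = a * (- a + b + 1).
  by rewrite mulrDr [d * (s * b)]mulrA [d * s]mulrC sd /d; ring.
have h3 : 0 <= d * (a + s * b) by apply: mulr_ge0 => //; apply: ltW.
have h4 : a * (- a + b + 1) < 0 by rewrite pmulr_llt0 //; lra.
lra.
Qed.

Lemma ip_expand (R : realType) n (v e : 'cV[R]_n) s :
  ip (v + s *: e) (v + s *: e) = ip v v + 2 * s * ip v e + s ^+ 2 * ip e e.
Proof. rewrite !ipDl !ipDr !ipZl !ipZr [ip e v]ipC; ring. Qed.

Lemma argmin_vi (R : realType) n (f : 'cV[R]_n -> R) X t w x :
  convex_fun f -> convex_set X -> 0 < t ->
  is_argmin (fun z => f z + (2 * t)^-1 * sqnorm (z - w)) X x ->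
  forall z, X z -> f x + ip (t^-1 *: (w - x)) (z - x) <= f z.
Proof.
move=> cf cX t0 [Xx Hmin] z Xz.
set c := (2 * t)^-1.
have ct : t^-1 = 2 * c by rewrite /c invfM mulrA divff ?mul1r // pnatr_eq0.
have c0 : 0 < c by rewrite /c invr_gt0 mulr_gt0.
set P := ip (x - w) (z - x).
set Q := ip (z - x) (z - x).
have Q0 : 0 <= Q by apply: ip_ge0.
have HP : ip (w - x) (z - x) = - P by rewrite /P -opprB ipNl.
rewrite ipZl HP ct.
suff : 0 <= f z - f x + 2 * c * P by lra.
apply: (@small_lemma R _ (c * Q)); first by apply: mulr_ge0 => //; apply: ltW.
move=> s s0 s1.
have s01 : 0 <= s <= 1 by rewrite (ltW s0) s1.
have Xzs := cX z x s Xz Xx s01.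
have Hf := cf z x s s01.
have Hm : f x + c * ip (x - w) (x - w) <=
   f (s *: z + (1 - s) *: x) + c * ip (s *: z + (1 - s) *: x - w) (s *: z + (1 - s) *: x - w)
   := Hmin _ Xzs.
have E : s *: z + (1 - s) *: x - w = (x - w) + s *: (z - x).
  by apply/matrixP => i j; rewrite !mxE; ring.
rewrite E in Hm.
rewrite ip_expand -/P -/Q in Hm.
rewrite -(pmulr_rge0 _ s0).
nra.
Qed.

Lemma step_alg (R : realType) N M (A : 'M[R]_(M, N)) ti si dx ex dy ey :
  ti * ip dx ex + si * ip dy ey - ip (A *m ex) dy - ip (A *m dx) ey <= 0 ->
  ti * ip ex ex + si * ip ey ey - 2 * ip (A *m ex) ey <=
  (ti * ip (ex - dx) (ex - dx) + si * ip (ey - dy) (ey - dy)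
     - 2 * ip (A *m (ex - dx)) (ey - dy))
  - (ti * ip dx dx + si * ip dy dy - 2 * ip (A *m dx) dy).
Proof.
move=> H; rewrite !mulmxBr !ipBl !ipBr [ip dx ex]ipC [ip dy ey]ipC.
rewrite [ip dx ex]ipC [ip dy ey]ipC in H.
lra.
Qed.

Lemma quad_lemma (R : realType) (a b c : R) : 0 <= c ->
  (forall s, 0 <= a + 2 * s * b + s ^+ 2 * c) -> b ^+ 2 <= a * c.
Proof.
move=> c0 H; have a0 : 0 <= a by have := H 0; rewrite !(mul0r, mulr0, expr0n) /=; lra.
have [cp|] := ltrP 0 c.
  set s := - b / c.
  have sc : s * c = - b by rewrite /s divfK // gt_eqF.
  have := H s.
  have e : s ^+ 2 * c = s * (s * c) by rewrite expr2 mulrA.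
  rewrite e sc => h.
  have {}h : 0 <= a + s * b by lra.
  have h2 : 0 <= c * (a + s * b) by apply: mulr_ge0 => //; apply: ltW.
  have e2 : c * (a + s * b) = a * c - b ^+ 2 by rewrite mulrDr mulrA [c * s]mulrC sc; ring.
  rewrite e2 in h2.
  lra.
move=> cle; have c00 : c = 0 by apply/eqP; rewrite eq_le cle c0.
subst c; rewrite mulr0.
have [b0|bn0] := eqVneq b 0; first by rewrite b0 expr0n.
set s := - (a + 1) / (2 * b).
have sb : s * (2 * b) = - (a + 1) by rewrite /s divfK // mulf_neq0 // pnatr_eq0.
have := H s; rewrite mulr0 addr0 -mulrA [2 * (s * b)]mulrA [2 * s]mulrC -mulrA sb.
lra.
Qed.

Lemma ipSym (R : realType) n (C : 'M[R]_n) x y : C^T = C ->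
  ip x (C *m y) = ip y (C *m x).
Proof. by move=> sC; rewrite ipC ip_mx sC. Qed.

Lemma cs_form (R : realType) n (C : 'M[R]_n) : C^T = C ->
  (forall z, 0 <= ip z (C *m z)) ->
  forall x y, (ip y (C *m x)) ^+ 2 <= ip x (C *m x) * ip y (C *m y).
Proof.
move=> sC psd x y; apply: quad_lemma; first exact: psd.
move=> s; have := psd (x + s *: y).
rewrite mulmxDr -scalemxAr !ipDl !ipDr !ipZl !ipZr (ipSym x y sC).
by have -> : ip x (C *m x) + 2 * s * ip y (C *m x) + s ^+ 2 * ip y (C *m y) =
  ip x (C *m x) + s * ip y (C *m x) + (s * ip y (C *m x) + s * (s * ip y (C *m y))) by ring.
Qed.

Lemma cs (R : realType) n (x y : 'cV[R]_n) : (ip x y) ^+ 2 <= ip x x * ip y y.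
Proof.
have psd : forall z : 'cV[R]_n, 0 <= ip z (1%:M *m z) by move=> z; rewrite mul1mx ip_ge0.
have H := cs_form (trmx1 _ _) psd y x. rewrite !mul1mx mulrC in H. exact H.
Qed.

Lemma gen_bound (R : realType) m n (Mx : 'M[R]_(m, n)) :
  exists K : R, 0 <= K /\ forall z, ip (Mx *m z) (Mx *m z) <= K * ip z z.
Proof.
exists (\sum_i ip (row i Mx)^T (row i Mx)^T); split.
  by apply: sumr_ge0 => i _; apply: ip_ge0.
move=> z; rewrite mulr_suml [X in X <= _]ipE; apply: ler_sum => i _.
have -> : (Mx *m z) i 0 = ip (row i Mx)^T z.
  by rewrite ipE mxE; apply: eq_bigr => j _; rewrite !mxE.
by rewrite -expr2 cs.
Qed.

Lemma ip00 (R : realType) n : ip (0 : 'cV[R]_n) 0 = 0.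
Proof. by rewrite ipE big1 // => i _; rewrite mxE mul0r. Qed.

Lemma ip_gt0 (R : realType) n (z : 'cV[R]_n) : z != 0 -> 0 < ip z z.
Proof.
move=> zn; rewrite lt_def ip_ge0 andbT; apply/negP => /eqP e.
by move: zn; rewrite (ip_eq0 e) eqxx.
Qed.

Lemma spec_bound (R : realType) N M (A : 'M[R]_(M, N)) :
  exists r : R, 0 <= r /\ (r = 0 \/ r <= spec_radius (A^T *m A)) /\
    forall z, ip (A *m z) (A *m z) <= r * ip z z.
Proof.
set B := A^T *m A.
have QB : forall z, ip (A *m z) (A *m z) = ip z (B *m z).
  by move=> z; rewrite ip_mx mulmxA.
have [K [K0 HK]] := gen_bound A.
set T := [set t : R | 0 <= t /\ forall z, ip (A *m z) (A *m z) <= t * ip z z].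
have TK : T K by split.
have T0 : T !=set0 by exists K.
have lbT : lbound T 0 by move=> t [].
have hinf : has_inf T by split => //; exists 0.
set l := inf T.
have l0 : 0 <= l by apply: lb_le_inf.
have Tl : forall z, ip (A *m z) (A *m z) <= l * ip z z.
  move=> z; rewrite leNgt; apply/negP => H.
  have pz : 0 < ip z z.
    rewrite lt_def ip_ge0 andbT; apply/negP => /eqP e.
    by move: H; rewrite e mulr0 (ip_eq0 e) mulmx0 ip00 ltxx.
  set e := (ip (A *m z) (A *m z) - l * ip z z) / ip z z.
  have e0 : 0 < e by rewrite divr_gt0 // subr_gt0.
  have [t [t0 Ht] tl] := inf_adherent e0 hinf.
  have h1 := Ht z.
  have h2 : e * ip z z = ip (A *m z) (A *m z) - l * ip z z by rewrite divfK // gt_eqF.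
  have h3 : 0 < (l + e - t) * ip z z by apply: mulr_gt0 => //; lra.
  nra.
have [l00|lpos] := eqVneq l 0.
  by exists l; split => //; split; [left | exact: Tl].
have lp : 0 < l by rewrite lt_def lpos l0.
exists l; split => //; split; last exact: Tl.
right.
have sB : B^T = B by rewrite /B trmx_mul trmxK.
set E := l%:M - B.
have sE : E^T = E by rewrite /E linearB /= tr_scalar_mx sB.
have qE : forall z, ip z (E *m z) = l * ip z z - ip (A *m z) (A *m z).
  by move=> z; rewrite /E mulmxBl mul_scalar_mx ipBr ipZr QB.
have psd : forall z, 0 <= ip z (E *m z) by move=> z; rewrite qE subr_ge0 Tl.
have notunit : ~~ ((- E) \in unitmx).
  apply/negP => U.
  have [K' [K'0 HK']] := gen_bound (invmx (- E)).
  have bnd : forall z, ip z z <= (K' * l + 1) * ip z (E *m z).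
    move=> z.
    have h1 : ip z z <= K' * ip (E *m z) (E *m z).
      by have := HK' ((- E) *m z); rewrite mulKmx // mulNmx ipNl ipNr opprK.
    have h2 : ip (E *m z) (E *m z) <= l * ip z (E *m z).
      have hc := cs_form sE psd z (E *m z).
      have h3 : ip (E *m z) (E *m (E *m z)) <= l * ip (E *m z) (E *m z).
        by rewrite qE; have := ip_ge0 (A *m (E *m z)); lra.
      move: hc h3; set p := ip (E *m z) (E *m z); set a := ip z (E *m z).
      set c := ip (E *m z) (E *m (E *m z)) => hc h3.
      have p0 : 0 <= p by apply: ip_ge0.
      have a0 : 0 <= a by apply: psd.
      rewrite leNgt; apply/negP => hlt.
      have : p * (p - l * a) > 0 by apply: mulr_gt0; nra.
      nra.
    have a0 := psd z.
    nra.
  set k := K' * l + 1.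
  have k0 : 0 < k by rewrite /k; have := mulr_ge0 K'0 l0; lra.
  set ki := k^-1.
  have kki : k * ki = 1 by rewrite /ki divff // gt_eqF.
  have ki0 : 0 < ki by rewrite /ki invr_gt0.
  set t := Num.max 0 (l - ki).
  have Tt : T t.
    split; first by rewrite /t le_max lexx.
    move=> z; have b := bnd z; rewrite qE in b.
    have p0 := ip_ge0 z.
    have h : ki * ip z z <= l * ip z z - ip (A *m z) (A *m z).
      have := ler_wpM2l (ltW ki0) b; rewrite mulrA [ki * k]mulrC kki mul1r //.
    have : (l - ki) * ip z z <= t * ip z z by apply: ler_wpM2r => //; rewrite /t le_max lexx orbT.
    lra.
  have := ge_inf (ex_intro _ 0 lbT) Tt.
  rewrite /t le_max => /orP[]; lra.
have eig : eigenvalue B l.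
  rewrite /eigenvalue /eigenspace kermx_eq0 row_free_unit.
  by rewrite (_ : B - l%:M = - E) // /E opprB.
set S := [set `|a| | a in [set a : R | eigenvalue B a]].
have hsup : has_sup S.
  split; first by exists `|l|; exists l.
  exists K => y [a /eigenvalueP [v vB vn0] <-].
  set z := v^T.
  have Bz : B *m z = a *: z by rewrite /z -sB -trmx_mul vB linearZ.
  have pz : 0 < ip z z.
    apply: ip_gt0; apply/negP => /eqP z0; move/negP: vn0; apply.
    by apply/eqP; apply: trmx_inj; rewrite trmx0.
  have h1 := HK z.
  rewrite QB Bz ipZr in h1.
  have h2 := ip_ge0 (A *m z).
  rewrite QB Bz ipZr in h2.
  have a0 : 0 <= a by rewrite -(pmulr_lge0 _ pz).
  rewrite ger0_norm //.
  by rewrite -(ler_pM2r pz).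
have := sup_upper_bound hsup (ex_intro2 _ _ l eig erefl).
by rewrite ger0_norm.
Qed.

Definition hq (R : realType) N M (t s : R) (a : 'cV[R]_N) (b : 'cV[R]_M) : R :=
  t^-1 * ip a a + s^-1 * ip b b.
Definition mq (R : realType) N M (A : 'M[R]_(M, N)) (t s : R) (a : 'cV[R]_N) (b : 'cV[R]_M) : R :=
  hq t s a b - 2 * ip (A *m a) b.

Lemma ipT (R : realType) m n (A : 'M[R]_(m, n)) u v : ip (A^T *m u) v = ip (A *m v) u.
Proof. by rewrite ipC ip_mx. Qed.

Lemma young (R : realType) n (u v : 'cV[R]_n) t : 0 < t ->
  2 * ip u v <= t * ip u u + t^-1 * ip v v.
Proof.
move=> t0; have := ip_ge0 (t *: u - v).
rewrite !ipBl !ipBr !ipZl !ipZr [ip v u]ipC => h.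
have ti0 : 0 < t^-1 by rewrite invr_gt0.
have h2 := mulr_ge0 (ltW ti0) h.
have e : t^-1 * (t * (t * ip u u) - t * ip u v - (t * ip u v - ip v v)) =
   t * ip u u + t^-1 * ip v v - 2 * ip u v.
  by field; rewrite gt_eqF.
lra.
Qed.

Lemma hq_ge0 (R : realType) N M (t s : R) (a : 'cV[R]_N) (b : 'cV[R]_M) :
  0 < t -> 0 < s -> 0 <= hq t s a b.
Proof.
move=> t0 s0; rewrite /hq; apply: addr_ge0; apply: mulr_ge0;
  by [apply: ltW; rewrite invr_gt0 | apply: ip_ge0].
Qed.

Lemma c1_core (R : realType) N M (A : 'M[R]_(M, N)) r L t s a b :
  0 <= r -> r * L < 1 -> 0 < t -> 0 < s -> t * s <= L ->
  (forall z, ip (A *m z) (A *m z) <= r * ip z z) ->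
  (1 - (1 + r * L) / 2) * hq t s a b <= mq A t s a b.
Proof.
move=> r0 rL t0 s0 tsL Hr.
set th := (1 + r * L) / 2.
have L0 : 0 <= L by have := mulr_gt0 t0 s0; lra.
have th0 : 0 < th by rewrite /th divr_gt0 //; have := mulr_ge0 r0 L0; lra.
have hy := young (A *m a) b (divr_gt0 s0 th0).
have e4 : (s / th)^-1 = th / s by rewrite invf_div.
rewrite e4 in hy.
have hU := Hr a.
have key : s / th * r <= th / t.
  have e : th / t - s / th * r = th^-1 * t^-1 * (th * th - t * s * r).
    by field; rewrite ?gt_eqF.
  rewrite -subr_ge0 e; apply: mulr_ge0; first by apply: mulr_ge0; apply: ltW; rewrite invr_gt0.
  have : t * s * r <= L * r by apply: ler_wpM2r.
  rewrite /th; nra.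
have hP := ip_ge0 a.
have h1 : s / th * ip (A *m a) (A *m a) <= th / t * ip a a.
  apply: (le_trans (ler_wpM2l _ hU)); first by apply: ltW; apply: divr_gt0.
  by rewrite mulrA; apply: ler_wpM2r.
rewrite /mq /hq.
have e2 : th / s * ip b b = th * (s^-1 * ip b b) by rewrite mulrA.
have e3 : th / t * ip a a = th * (t^-1 * ip a a) by rewrite mulrA.
rewrite e2 in hy; rewrite e3 in h1.
lra.
Qed.

Lemma c2x_core (R : realType) N M (A : 'M[R]_(M, N)) K D Bd t s a b :
  0 <= K -> (forall z, ip (A *m z) (A *m z) <= K * ip z z) -> ip a a <= D ->
  0 < t -> 0 < s -> s <= Bd ->
  hq t s a b <= 2 * mq A t s a b + 4 * Bd * K * D.
Proof.
move=> K0 HK aD t0 s0 sB.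
have s20 : 0 < 2 * s by rewrite mulr_gt0.
have hy := young (A *m a) b s20.
rewrite invfM in hy.
have hU := HK a.
have U0 := ip_ge0 (A *m a).
have P0 := ip_ge0 a.
have V0 := ip_ge0 b.
have hU2 : ip (A *m a) (A *m a) <= K * D by apply: (le_trans hU); apply: ler_wpM2l.
have h3 : s * ip (A *m a) (A *m a) <= Bd * (K * D).
  apply: (le_trans (ler_wpM2r U0 sB)); apply: ler_wpM2l => //; lra.
have ti0 : 0 <= t^-1 * ip a a by apply: mulr_ge0 => //; apply: ltW; rewrite invr_gt0.
have e : 2^-1 * s^-1 * ip b b = 2^-1 * (s^-1 * ip b b) by rewrite mulrA.
rewrite e in hy.
rewrite /mq /hq; lra.
Qed.

Lemma c2y_core (R : realType) N M (A : 'M[R]_(M, N)) K D Bd t s a b :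
  0 <= K -> (forall z, ip (A^T *m z) (A^T *m z) <= K * ip z z) -> ip b b <= D ->
  0 < t -> 0 < s -> t <= Bd ->
  hq t s a b <= 2 * mq A t s a b + 4 * Bd * K * D.
Proof.
move=> K0 HK bD t0 s0 tB.
have t20 : 0 < 2 * t by rewrite mulr_gt0.
have t2i : 0 < (2 * t)^-1 by rewrite invr_gt0.
have hy := young a (A^T *m b) t2i.
rewrite invrK -ip_mx invfM in hy.
have hU := HK b.
have U0 := ip_ge0 (A^T *m b).
have P0 := ip_ge0 a.
have V0 := ip_ge0 b.
have hU2 : ip (A^T *m b) (A^T *m b) <= K * D by apply: (le_trans hU); apply: ler_wpM2l.
have h3 : t * ip (A^T *m b) (A^T *m b) <= Bd * (K * D).
  apply: (le_trans (ler_wpM2r U0 tB)); apply: ler_wpM2l => //; lra.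
have si0 : 0 <= s^-1 * ip b b by apply: mulr_ge0 => //; apply: ltW; rewrite invr_gt0.
have e : 2^-1 * t^-1 * ip a a = 2^-1 * (t^-1 * ip a a) by rewrite mulrA.
rewrite e in hy.
rewrite /mq /hq; lra.
Qed.

Lemma inv_step (R : realType) (a b p : R) : 0 < a -> 0 < b -> (a - b) / a <= p ->
  b^-1 <= a^-1 + p * b^-1.
Proof.
move=> a0 b0 h.
have e : b^-1 - a^-1 - p * b^-1 = b^-1 * ((a - b) / a - p) by field; rewrite ?gt_eqF.
have : b^-1 * ((a - b) / a - p) <= 0.
  by rewrite pmulr_rle0 ?invr_gt0 // subr_le0.
lra.
Qed.

Lemma phi_ge0 (R : realType) (tau sigma : nat -> R) k : 0 <= phi tau sigma k.
Proof. by rewrite /phi le_max lexx orbT. Qed.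

Lemma switch (R : realType) N M (tau sigma : nat -> R) k (a : 'cV[R]_N) (b : 'cV[R]_M) :
  (forall k, 0 < tau k) -> (forall k, 0 < sigma k) ->
  hq (tau k.+1) (sigma k.+1) a b <=
  hq (tau k) (sigma k) a b + phi tau sigma k * hq (tau k.+1) (sigma k.+1) a b.
Proof.
move=> t0 s0.
have h1 : (tau k - tau k.+1) / tau k <= phi tau sigma k by rewrite /phi !le_max lexx.
have h2 : (sigma k - sigma k.+1) / sigma k <= phi tau sigma k by rewrite /phi !le_max lexx orbT.
have i1 := inv_step (t0 k) (t0 k.+1) h1.
have i2 := inv_step (s0 k) (s0 k.+1) h2.
have P0 := ip_ge0 a; have V0 := ip_ge0 b.
have j1 := ler_wpM2r P0 i1.
have j2 := ler_wpM2r V0 i2.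
rewrite /hq; lra.
Qed.

Lemma psum_mono (R : realType) (ph : nat -> R) m d : (forall k, 0 <= ph k) ->
  \sum_(k < m) ph k <= \sum_(k < m + d) ph k.
Proof.
move=> p0; elim: d => [|d IH]; first by rewrite addn0.
by rewrite addnS big_ord_recr /=; have := p0 (m + d)%N; lra.
Qed.

Lemma seq_bound (R : realType) (b ph : nat -> R) (al Cp : R) (n0 : nat) :
  0 < al -> (forall k, 0 <= ph k) -> (forall n, \sum_(k < n) ph k < Cp) ->
  (forall n, (n0 <= n)%N -> 0 <= b n) ->
  (forall n, (n0 <= n)%N -> (1 - al * ph n) * b n.+1 <= b n) ->
  exists C, forall n, (n0 <= n)%N -> b n <= C.
Proof.
move=> al0 p0 HC b0 rec.
set s := fun n => \sum_(k < n) ph k.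
set S := range s.
have hsup : has_sup S.
  split; first by exists (s 0%N); exists 0%N.
  by exists Cp => y [n _ <-]; apply: ltW; apply: HC.
set eps := (2 * al)^-1.
have eps0 : 0 < eps by rewrite /eps invr_gt0 mulr_gt0.
have [e [K0 _ <-] hK0] := sup_adherent eps0 hsup.
set K := maxn K0 n0.
have sKK0 : s K0 <= s K.
  by have := psum_mono K0 (K - K0) p0; rewrite subnKC // leq_maxl.
have tail : forall n, (K <= n)%N -> al * (s n - s K) <= 2^-1.
  move=> n Kn.
  have sn : s n <= sup S by apply: sup_upper_bound => //; exists n.
  have : al * (s n - s K) <= al * eps.
    by apply: ler_wpM2l; [apply: ltW | lra].
  by rewrite /eps invfM mulrCA divff ?gt_eqF // mulr1.
have sKn : forall n, (K <= n)%N -> s K <= s n.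
  by move=> n Kn; have := psum_mono K (n - K) p0; rewrite subnKC.
have n0K : (n0 <= K)%N by rewrite leq_maxr.
have inv : forall d, b (K + d)%N * (1 - al * (s (K + d)%N - s K)) <= b K.
  elim=> [|d IH]; first by rewrite addn0 subrr mulr0 subr0 mulr1.
  have Kd : (n0 <= K + d)%N by apply: (leq_trans n0K); apply: leq_addr.
  have r := rec _ Kd.
  have bd := b0 _ Kd.
  have bd1 : 0 <= b (K + d).+1 by apply: b0; apply: (leq_trans Kd).
  have sS : s (K + d.+1)%N = s (K + d)%N + ph (K + d)%N by rewrite /s addnS big_ord_recr.
  have tl := tail (K + d.+1)%N (leq_addr _ _).
  have tl0 := sKn (K + d)%N (leq_addr _ _).
  move: tl; rewrite sS addnS => tl.
  set T := al * (s (K + d)%N - s K).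
  set p := al * ph (K + d)%N.
  have T0 : 0 <= T by rewrite /T mulr_ge0 ?subr_ge0 //; apply: ltW.
  have p0' : 0 <= p by rewrite /p mulr_ge0 //; apply: ltW.
  have e1 : al * (s (K + d)%N + ph (K + d)%N - s K) = T + p by rewrite /T /p; ring.
  rewrite e1 in tl *.
  have h1 : (1 - T) * ((1 - p) * b (K + d).+1) <= (1 - T) * b (K + d)%N.
    by apply: ler_wpM2l => //; lra.
  have h2 : 0 <= b (K + d).+1 * (T * p) by rewrite mulr_ge0 // mulr_ge0.
  rewrite -/T in IH; rewrite -/p in r.
  lra.
exists (2 * b K + \sum_(i < K) `|b i|) => n n0n.
have sum0 : 0 <= \sum_(i < K) `|b i| by apply: sumr_ge0 => i _.
have bK0 := b0 _ n0K.
case: (leqP K n) => Kn.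
  have := inv (n - K)%N; rewrite subnKC // => h.
  have := tail n Kn; have := b0 _ n0n => bn0 tn.
  have : b n * 2^-1 <= b n * (1 - al * (s n - s K)) by apply: ler_wpM2l => //; lra.
  lra.
have -> : \sum_(i < K) `|b i| = `|b (Ordinal Kn)| + \sum_(i < K | i != Ordinal Kn) `|b i|.
  by rewrite (bigD1 (Ordinal Kn)).
have : 0 <= \sum_(i < K | i != Ordinal Kn) `|b i| by apply: sumr_ge0 => i _.
have := ler_norm (b n).
simpl; lra.
Qed.

Lemma colB (R : realType) N M (a c : 'cV[R]_N) (b d : 'cV[R]_M) :
  col_mx a b - col_mx c d = col_mx (a - c) (b - d).
Proof. by rewrite opp_col_mx add_col_mx. Qed.

Lemma qH' (R : realType) N M (t s : R) (a : 'cV[R]_N) (b : 'cV[R]_M) :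
  qnorm2 (Hmat N M t s) (col_mx a b) = hq t s a b.
Proof. exact: qH. Qed.

Lemma qM' (R : realType) N M (A : 'M[R]_(M, N)) (t s : R) (a : 'cV[R]_N) (b : 'cV[R]_M) :
  qnorm2 (Mmat A t s) (col_mx a b) = mq A t s a b.
Proof. exact: qM. Qed.

Lemma descent (R : realType) (N M : nat) (A : 'M[R]_(M, N))
  (f : 'cV[R]_N -> R) (g : 'cV[R]_M -> R) (X : set 'cV[R]_N) (Y : set 'cV[R]_M)
  (tau sigma : nat -> R) (x : nat -> 'cV[R]_N) (y : nat -> 'cV[R]_M)
  (xs : 'cV[R]_N) (ys : 'cV[R]_M) :
  convex_fun f -> convex_fun g -> convex_set X -> convex_set Y ->
  (forall k, 0 < tau k) -> (forall k, 0 < sigma k) ->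
  pdhg_iterates A f g X Y tau sigma x y ->
  subdiff_ind f X xs (- (A^T *m ys)) ->
  subdiff_ind g Y ys (A *m xs) ->
  forall k, mq A (tau k) (sigma k) (x k.+1 - xs) (y k.+1 - ys) <=
    mq A (tau k) (sigma k) (x k - xs) (y k - ys)
    - mq A (tau k) (sigma k) (x k.+1 - x k) (y k.+1 - y k).
Proof.
move=> cf cg cX cY t0 s0 Hit [Xxs Hfs] [Yys Hgs] k.
have [Hx Hy] := Hit k.
have vx := argmin_vi cf cX (t0 k) Hx Xxs.
have vy := argmin_vi cg cY (s0 k) Hy Yys.
have hfs : f xs + ip (- (A^T *m ys)) (x k.+1 - xs) <= f (x k.+1) := Hfs _ Hx.1.
have hgs : g ys + ip (A *m xs) (y k.+1 - ys) <= g (y k.+1) := Hgs _ Hy.1.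
have tn : tau k != 0 by rewrite gt_eqF.
have sn : sigma k != 0 by rewrite gt_eqF.
set dx := x k.+1 - x k; set ex := x k.+1 - xs.
set dy := y k.+1 - y k; set ey := y k.+1 - ys.
have Ex1 : (tau k)^-1 *: ((x k - tau k *: (A^T *m y k)) - x k.+1) =
    - ((tau k)^-1 *: dx) - (A^T *m (ey - dy) + A^T *m ys).
  have -> : A^T *m (ey - dy) + A^T *m ys = A^T *m y k.
    by rewrite -mulmxDr; congr (_ *m _); apply/matrixP => i j; rewrite /ey /dy !mxE; ring.
  set v := A^T *m y k.
  by apply/matrixP => i j; rewrite /dx !mxE; field.
have Ex2 : xs - x k.+1 = - ex by rewrite /ex opprB.
have Ey1 : (sigma k)^-1 *: ((y k + sigma k *: (A *m (2%:R *: x k.+1 - x k))) - y k.+1) =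
    - ((sigma k)^-1 *: dy) + (A *m (dx + ex) + A *m xs).
  have -> : A *m (dx + ex) + A *m xs = A *m (2%:R *: x k.+1 - x k).
    by rewrite -mulmxDr; congr (_ *m _); apply/matrixP => i j; rewrite /ex /dx !mxE; ring.
  set v := A *m (2%:R *: x k.+1 - x k).
  by apply/matrixP => i j; rewrite /dy !mxE; field.
have Ey2 : ys - y k.+1 = - ey by rewrite /ey opprB.
rewrite Ex1 Ex2 ipNr ipBl ipNl ipZl (ipDl (A^T *m (ey - dy))) !ipT (ipBr ey dy) in vx.
rewrite ipNl ipT in hfs.
rewrite Ey1 Ey2 ipNr (ipDl (- _)) ipNl ipZl (ipDl (A *m (dx + ex))) (mulmxDr A dx ex) (ipDl (A *m dx)) in vy.
have H : (tau k)^-1 * ip dx ex + (sigma k)^-1 * ip dy ey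
    - ip (A *m ex) dy - ip (A *m dx) ey <= 0 by lra.
have E3 : x k - xs = ex - dx by apply/matrixP => i j; rewrite /ex /dx !mxE; ring.
have E4 : y k - ys = ey - dy by apply/matrixP => i j; rewrite /ey /dy !mxE; ring.
rewrite /mq /hq E3 E4.
exact: step_alg.
Qed.

Lemma par (R : realType) n (u v : 'cV[R]_n) : ip (u - v) (u - v) <= 2 * ip u u + 2 * ip v v.
Proof.
rewrite !ipBl !ipBr; have := ip_ge0 (u + v).
rewrite !ipDl !ipDr [ip v u]ipC; lra.
Qed.

Lemma sqE (R : realType) n (v : 'cV[R]_n) : sqnorm v = ip v v.
Proof. by []. Qed.

Lemma unified (R : realType) (N M : nat) (A : 'M[R]_(M, N))
  (X : set 'cV[R]_N) (Y : set 'cV[R]_M)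
  (tau sigma : nat -> R) (x : nat -> 'cV[R]_N) (y : nat -> 'cV[R]_M)
  (xs : 'cV[R]_N) (ys : 'cV[R]_M) (Bd : R) :
  (forall k, 0 < tau k) -> (forall k, 0 < sigma k) ->
  (forall k, tau k <= Bd /\ sigma k <= Bd) ->
  (forall j, X (x j.+1)) -> (forall j, Y (y j.+1)) -> X xs -> Y ys ->
  ((exists L : R, (forall k, (0 < k)%N -> tau k * sigma k < L) /\
                  L * spec_radius (A^T *m A) < 1)
   \/
   ((bounded_set X \/ bounded_set Y) /\
    exists c : R, 0 < c < 1 /\
      forall k, (0 < k)%N ->
        qnorm2 (Mmat A (tau k) (sigma k)) (col_mx (x k.+1) (y k.+1) - col_mx (x k) (y k))
        >= c * qnorm2 (Hmat N M (tau k) (sigma k)) (col_mx (x k.+1) (y k.+1) - col_mx (x k) (y k)))) ->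
  exists al be : R, 1 <= al /\ 0 <= be /\ forall k, (0 < k)%N ->
    0 <= mq A (tau k) (sigma k) (x k.+1 - x k) (y k.+1 - y k) /\
    forall j, (0 < j)%N ->
      hq (tau k) (sigma k) (x j - xs) (y j - ys) <=
        al * mq A (tau k) (sigma k) (x j - xs) (y j - ys) + be.
Proof.
move=> t0 s0 HB Xx Yy Xxs Yys [[L [HL Lr]] | [bXY [c [/andP[c0 c1] Hc]]]].
  have [r [r0 [rc Hr]]] := spec_bound A.
  have L0 : 0 < L by have := HL 1%N isT; have := mulr_gt0 (t0 1%N) (s0 1%N); lra.
  have rL : r * L < 1.
    case: rc => [->|rle]; first by rewrite mul0r ltr01.
    by apply: le_lt_trans Lr; rewrite mulrC; apply: ler_wpM2l => //; apply: ltW.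
  set th := (1 + r * L) / 2.
  have th1 : 0 < 1 - th by rewrite /th; lra.
  exists (1 - th)^-1, 0; split; first by rewrite invf_ge1 // /th; have := mulr_ge0 r0 (ltW L0); lra.
  split => // k k0.
  have core := fun a b => c1_core (A := A) a b r0 rL (t0 k) (s0 k) (ltW (HL k k0)) Hr.
  split.
    have h2 := core (x k.+1 - x k) (y k.+1 - y k).
    have h1 := hq_ge0 (x k.+1 - x k) (y k.+1 - y k) (t0 k) (s0 k).
    apply: le_trans h2; exact: mulr_ge0 (ltW th1) h1.
  move=> j _; have h := core (x j - xs) (y j - ys).
  have ti : 0 <= (1 - th)^-1 by rewrite invr_ge0; apply: ltW.
  have := ler_wpM2l ti h.
  by rewrite mulrA mulVf ?gt_eqF // mul1r addr0.
have nonneg : forall k, (0 < k)%N -> 0 <= mq A (tau k) (sigma k) (x k.+1 - x k) (y k.+1 - y k).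
  move=> k k0; have := Hc k k0; rewrite colB qH' qM' => h.
  have := hq_ge0 (x k.+1 - x k) (y k.+1 - y k) (t0 k) (s0 k) => h0.
  by apply: le_trans h; apply: mulr_ge0 => //; apply: ltW.
have Bd0 : 0 <= Bd by have := (HB 0%N).1; have := t0 0%N; lra.
case: bXY => [[rX HrX] | [rY HrY]].
  have [K [K0 HK]] := gen_bound A.
  have rX0 : 0 <= rX by have := HrX _ Xxs; rewrite sqE; have := ip_ge0 xs; lra.
  exists 2, (4 * Bd * K * (4 * rX)); split; first by lra.
  split; first by rewrite !mulr_ge0 //; lra.
  move=> k k0; split; first exact: nonneg.
  case=> // j _; apply: c2x_core => //; last by case: (HB k).
  have := par (x j.+1) xs; have := HrX _ (Xx j); have := HrX _ Xxs; rewrite !sqE; lra.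
have [K [K0 HK]] := gen_bound A^T.
have rY0 : 0 <= rY by have := HrY _ Yys; rewrite sqE; have := ip_ge0 ys; lra.
exists 2, (4 * Bd * K * (4 * rY)); split; first by lra.
split; first by rewrite !mulr_ge0 //; lra.
move=> k k0; split; first exact: nonneg.
case=> // j _; apply: c2y_core => //; last by case: (HB k).
have := par (y j.+1) ys; have := HrY _ (Yy j); have := HrY _ Yys; rewrite !sqE; lra.
Qed.

Unset Implicit Arguments.

Theorem mainTheorem3 (R : realType) (N M : nat) (A : 'M[R]_(M, N))
  (f : 'cV[R]_N -> R) (g : 'cV[R]_M -> R) (X : set 'cV[R]_N) (Y : set 'cV[R]_M)
  (tau sigma : nat -> R) (x : nat -> 'cV[R]_N) (y : nat -> 'cV[R]_M)
  (xs : 'cV[R]_N) (ys : 'cV[R]_M) :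
  convex_fun f -> convex_fun g -> convex_set X -> convex_set Y ->
  (forall k, 0 < tau k) -> (forall k, 0 < sigma k) ->
  pdhg_iterates A f g X Y tau sigma x y ->
  (* (A) *)
  (exists B : R, forall k, tau k <= B /\ sigma k <= B) ->
  (* (B) *)
  (exists Cphi : R, forall n, \sum_(k < n) phi tau sigma k < Cphi) ->
  (* (C) *)
  ((exists L : R, (forall k, (0 < k)%N -> tau k * sigma k < L) /\
                  L * spec_radius (A^T *m A) < 1)
   \/
   ((bounded_set X \/ bounded_set Y) /\
    exists c : R, 0 < c < 1 /\
      forall k, (0 < k)%N ->
        qnorm2 (Mmat A (tau k) (sigma k)) (col_mx (x k.+1) (y k.+1) - col_mx (x k) (y k))
        >= c * qnorm2 (Hmat N M (tau k) (sigma k)) (col_mx (x k.+1) (y k.+1) - col_mx (x k) (y k)))) ->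
  (* saddle point *)
  subdiff_ind f X xs (- (A^T *m ys)) ->
  subdiff_ind g Y ys (A *m xs) ->
  exists CU : R, 0 < CU /\
    forall k, qnorm2 (Hmat N M (tau k) (sigma k)) (col_mx (x k) (y k) - col_mx xs ys) <= CU.
Proof.
move=> cf cg cX cY t0 s0 Hit [Bd HB] [Cp HC] HCc Sx Sy.
have desc := descent cf cg cX cY t0 s0 Hit Sx Sy.
have Xx : forall j, X (x j.+1) by move=> j; exact: (Hit j).1.1.
have Yy : forall j, Y (y j.+1) by move=> j; exact: (Hit j).2.1.
have [al [be [al1 [be0 U]]]] := unified t0 s0 HB Xx Yy Sx.1 Sy.1 HCc.
set h := fun n => hq (tau n) (sigma n) (x n - xs) (y n - ys).
set b := fun n => al * mq A (tau n) (sigma n) (x n - xs) (y n - ys) + be.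
have hb : forall n, (0 < n)%N -> h n <= b n by move=> n n0; exact: (U n n0).2 n n0.
have h0 : forall n, 0 <= h n by move=> n; exact: hq_ge0.
have al0 : 0 < al by lra.
have [C HCb] : exists C, forall n, (1 <= n)%N -> b n <= C.
  apply: (seq_bound (ph := phi tau sigma) (al := al) (Cp := Cp) al0 (phi_ge0 tau sigma) HC).
    by move=> n n0; apply: le_trans (hb n n0); apply: h0.
  move=> n n0.
  have d := desc n.
  have nn := (U n n0).1.
  have sw := switch n (x n.+1 - xs) (y n.+1 - ys) t0 s0.
  have hb1 := hb n.+1 isT.
  have p0 := phi_ge0 tau sigma n.
  have E : mq A (tau n.+1) (sigma n.+1) (x n.+1 - xs) (y n.+1 - ys) =
    mq A (tau n) (sigma n) (x n.+1 - xs) (y n.+1 - ys) +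
    (hq (tau n.+1) (sigma n.+1) (x n.+1 - xs) (y n.+1 - ys) -
     hq (tau n) (sigma n) (x n.+1 - xs) (y n.+1 - ys)) by rewrite /mq; ring.
  rewrite /h /b in hb1; rewrite /b.
  move: E d nn sw hb1.
  set M1 := mq A (tau n.+1) (sigma n.+1) _ _.
  set M0 := mq A (tau n) (sigma n) (x n.+1 - xs) _.
  set H1 := hq (tau n.+1) _ _ _.
  set H0 := hq (tau n) _ _ _.
  set an := mq A (tau n) (sigma n) (x n - xs) _.
  set dU := mq A (tau n) (sigma n) (x n.+1 - x n) _.
  set ph := phi tau sigma n.
  move=> E d nn sw hb1.
  have k2 : ph * H1 <= ph * (al * M1 + be) by apply: ler_wpM2l.
  have k1 : al * M1 <= al * (an + ph * (al * M1 + be)) by apply: ler_wpM2l; [lra | lra].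
  lra.
exists (1 + `|C| + h 0%N); split.
  by have := h0 0%N; have := normr_ge0 C; lra.
case=> [|k].
  rewrite colB qH'; have := normr_ge0 C; rewrite -/(h 0%N); lra.
rewrite colB qH'.
have := hb k.+1 isT; have := HCb k.+1 isT; have := ler_norm C; have := h0 0%N.
rewrite /h; lra.
Qed.
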